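(* If $G$ is a finite connected interval graph, then the subgraph of $G$ induced by the vertices of positive weight is a disjoint union of paths.
   Context: A finite simple graph is an interval graph iff its vertices can be assigned (closed, bounded) real intervals so that two vertices are adjacent iff their intervals intersect. A local component at a vertex $z$ is a connected component of $G\setminus\{z\}$; it is exterior iff it contains a vertex not adjacent to $z$. If $z$ has $n$ local components, the weight $\mathrm{wt}(z)$ is the sum of the $n-2$ smallest orders among the non-exterior local components at $z$ ($0$ if $n\le 2$). *)

(* Defs.v *)
From Stdlib Require Import Reals.
From mathcomp Require Import all_boot.
Set Implicit Arguments. Unset Strict Implicit. Unset Printing Implicit Defensive.

Section Defs.
Variable T : finType.

Definition simple_graph (e : rel T) : Prop := symmetric e /\ irreflexive e.

Definition connected_graph (e : rel T) : Prop := forall x y : T, connect e x y.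

Definition interval_graph (e : rel T) : Prop :=
  exists l r : T -> R,
    (forall x, Rle (l x) (r x)) /\
    (forall x y, x != y -> (e x y <-> (Rle (l x) (r y) /\ Rle (l y) (r x)))).

Definition del_vertex (e : rel T) (z : T) : rel T :=
  fun x y => [&& e x y, x != z & y != z].

Definition local_components (e : rel T) (z : T) : {set {set T}} :=
  [set [set y | connect (del_vertex e z) x y] | x in [set~ z]].

Definition exterior (e : rel T) (z : T) (C : {set T}) : bool :=
  [exists y in C, ~~ e z y].

Definition weight (e : rel T) (z : T) : nat :=
  let n := #|local_components e z| in
  let ords := map (fun C : {set T} => #|C|)
               (filter (fun C : {set T} => ~~ exterior e z C) (enum (local_components e z))) in
  sumn (take (n - 2) (sort leq ords)).

Definition induced (e : rel T) (S : {set T}) : rel T :=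
  fun x y => [&& e x y, x \in S & y \in S].

Definition components_on (e : rel T) (S : {set T}) : {set {set T}} :=
  [set [set y | connect (induced e S) x y] | x in S].

Definition is_path_on (e : rel T) (C : {set T}) : Prop :=
  exists s : seq T, uniq s /\ (forall x, x \in C <-> x \in s) /\
    (forall x0 i j, i < size s -> j < size s ->
       (e (nth x0 s i) (nth x0 s j) <-> (i.+1 == j) || (j.+1 == i))).

Definition disjoint_union_of_paths (e : rel T) (S : {set T}) : Prop :=
  forall C, C \in components_on e S -> is_path_on e C.

End Defs.

(* Main.v *)
Require Import Defs.
From Stdlib Require Import Reals Lra.
From mathcomp Require Import all_boot zify.
Set Implicit Arguments. Unset Strict Implicit. Unset Printing Implicit Defensive.

Local Notation "x <=R y" := (Rle x y) (at level 70, no associativity).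
Local Notation "x <R y" := (Rlt x y) (at level 70, no associativity).

Definition Rleb (x y : R) : bool := if Rle_dec x y then true else false.
Lemma RlebP (x y : R) : reflect (x <=R y) (Rleb x y).
Proof. rewrite /Rleb; case: Rle_dec => H; constructor; auto. Qed.

Definition IG (T : finType) (e : rel T) (l r : T -> R) : Prop :=
  [/\ symmetric e, irreflexive e, (forall x, (l x <=R r x)) &
   (forall x y, x != y -> (e x y <-> ((l x <=R r y) /\ (l y <=R r x))))].

Definition good (T : finType) (e : rel T) z := 2 < #|local_components e z|.

Lemma weight_good (T : finType) (e : rel T) z : 0 < weight e z -> good e z.
Proof.
rewrite /weight /good; set n := #|_|; move=> H; rewrite ltnNge; apply/negP=> Hn.
move: H; have ->: n - 2 = 0 by lia. by rewrite take0.
Qed.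

Lemma del_sym (T : finType) (e : rel T) z : symmetric e -> symmetric (del_vertex e z).
Proof.
move=> Hs x y; rewrite /del_vertex Hs.
by case: (e y x); case: (x != z); case: (y != z).
Qed.

Lemma nocover (T : finType) (e : rel T) l r z a b :
  IG e l r -> connected_graph e -> good e z -> a != z -> b != z -> (a = b \/ e a b) ->
  ~ (forall p, (l z <=R p /\ p <=R r z) -> (l a <=R p /\ p <=R r a) \/ (l b <=R p /\ p <=R r b)).
Proof.
case=> Hs Hirr Hlr Hadj Hc Hg Ha Hb Hab Hcov.
set D := del_vertex e z.
have DS : connect_sym D by apply: sym_connect_sym; apply: del_sym.
have Hba : connect D b a.
  case: Hab => [->|Hab]; first exact: connect0.
  by apply: connect1; rewrite /D /del_vertex Hb Ha Hs Hab.
have key : forall w p, w != z -> (l z <=R p /\ p <=R r z) -> (l w <=R p /\ p <=R r w) ->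
    connect D w a.
  move=> w p Hw Hp Hpw; case: (Hcov p Hp) => Hq.
  - case: (eqVneq w a) => [->|Hwa]; first exact: connect0.
    apply: connect1; rewrite /D /del_vertex Hw Ha.
    have -> : e w a by apply (proj2 (Hadj w a Hwa)); lra.
    by [].
  - apply: connect_trans Hba.
    case: (eqVneq w b) => [->|Hwb]; first exact: connect0.
    apply: connect1; rewrite /D /del_vertex Hw Hb.
    have -> : e w b by apply (proj2 (Hadj w b Hwb)); lra.
    by [].
have Hnb : forall w, w != z -> e z w -> connect D w a.
  move=> w Hw Hzw.
  have Hzw' : z != w by rewrite eq_sym.
  have [Hi1 Hi2] := (proj1 (Hadj z w Hzw') Hzw).
  have H1 := Hlr w; have H2 := Hlr z.
  case: (Rle_dec (l w) (l z)) => H.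
  - by apply: (key w (l z)) => //; lra.
  - by apply: (key w (l w)) => //; lra.
have Hpath : forall p x, x != z -> path e x p -> last x p = z -> connect D x a.
  elim=> [|y p IH] x Hx /=.
  - by move=> _ Hxz; rewrite Hxz eqxx in Hx.
  - case/andP=> Hxy Hp Hl.
    case: (eqVneq y z) => [Hyz|Hyz].
    + by apply: Hnb Hx _; rewrite Hs -Hyz.
    + apply: connect_trans (IH y Hyz Hp Hl).
      by apply: connect1; rewrite /D /del_vertex Hxy Hx Hyz.
have Hall : forall x, x != z -> connect D x a.
  move=> x Hx; case/connectP: (Hc x z) => p Hp Hl; exact: Hpath p x Hx Hp (esym Hl).
have : #|local_components e z| <= 1.
  rewrite -(cards1 [set y | connect D a y]); apply: subset_leq_card.
  apply/subsetP=> C /imsetP [x Hx ->]; rewrite !inE in Hx.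
  rewrite inE; apply/eqP/setP=> y; rewrite !inE.
  apply/idP/idP => H.
  - apply: connect_trans H; by rewrite DS; apply: Hall.
  - exact: connect_trans (Hall x Hx) H.
rewrite /good in Hg; lia.
Qed.

Lemma p1 (T : finType) (e : rel T) l r u v : IG e l r -> connected_graph e ->
  good e u -> good e v -> u != v ->
  (l u <=R l v) -> (l u <R l v) /\ (r u <R r v).
Proof.
move=> HG Hc Hu Hv Huv Hle.
have Hvu : v != u by rewrite eq_sym.
have Hr : (r u <R r v).
  case: (Rlt_le_dec (r u) (r v)) => // H; exfalso.
  apply: (@nocover _ e l r v u u HG Hc Hv Huv Huv (or_introl erefl)).
  move=> p Hp; left; lra.
split => //.
case: (Rlt_le_dec (l u) (l v)) => // H; exfalso.
apply: (@nocover _ e l r u v v HG Hc Hu Hvu Hvu (or_introl erefl)).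
move=> p Hp; left; lra.
Qed.

Lemma p2 (T : finType) (e : rel T) l r x y w : IG e l r -> connected_graph e ->
  good e x -> good e y -> good e w ->
  (l x <R l y) -> (l y <R l w) -> ~~ e x w.
Proof.
move=> HG Hc Hx Hy Hw H1 H2; apply/negP=> Hxw.
have Hxy : x != y by apply/eqP=> E; rewrite E in H1; lra.
have Hyw : y != w by apply/eqP=> E; rewrite E in H2; lra.
have Hxw' : x != w by apply/eqP=> E; rewrite E in H1; lra.
have Hwy : w != y by rewrite eq_sym.
have [_ Hr1] := p1 HG Hc Hx Hy Hxy (Rlt_le _ _ H1).
have [_ Hr2] := p1 HG Hc Hy Hw Hyw (Rlt_le _ _ H2).
have [Hs Hirr Hlr Hadj] := HG.
have [_ Hwx] := proj1 (Hadj x w Hxw') Hxw.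
apply: (@nocover _ e l r y x w HG Hc Hy Hxy Hwy (or_intror Hxw)).
move=> p Hp; case: (Rle_dec p (r x)) => H; [left|right]; lra.
Qed.

Lemma linj (T : finType) (e : rel T) l r u v : IG e l r -> connected_graph e ->
  good e u -> good e v -> l u = l v -> u = v.
Proof.
move=> HG Hc Hu Hv E; apply/eqP; apply/negPn/negP => Huv.
have [H _] := p1 HG Hc Hu Hv Huv (Req_le _ _ E). lra.
Qed.

Lemma crossing (T : finType) (R' : rel T) (P : pred T) u : forall p x,
  connect R' u x -> path R' x p -> P x -> ~~ P (last x p) ->
  exists y z, [/\ connect R' u y, R' y z, P y & ~~ P z].
Proof.
elim=> [|z p IH] x Hux /=.
  by move=> _ Px HP; rewrite Px in HP.
case/andP=> Hxz Hp Px Hl.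
case Pz: (P z).
- apply: (IH z) => //. exact: connect_trans Hux (connect1 Hxz).
- by exists x, z; rewrite Pz.
Qed.


Theorem theorem2p4 (T : finType) (e : rel T) :
  simple_graph e -> connected_graph e -> interval_graph e ->
  disjoint_union_of_paths e [set z | 0 < weight e z].
Proof.
move=> [Hs Hirr] Hc [l [r [Hlr Hadj]]].
have HG : IG e l r by split.
set S := [set z | 0 < weight e z].
have gS : forall z, z \in S -> good e z by move=> z; rewrite inE; apply: weight_good.
set E := induced e S.
have ES : symmetric E.
  move=> x y; rewrite /E /induced Hs.
  by case: (e y x); case: (x \in S); case: (y \in S).
have ESc := sym_connect_sym ES.
have inS : forall p x, x \in S -> path E x p -> last x p \in S.
  elim=> [|z p IH] x Hx //= /andP [Hxz Hp]; apply: IH Hp.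
  by case/and3P: Hxz.
move=> C /imsetP [x Hx ->].
set C0 := [set y | connect E x y].
have CS : forall y, y \in C0 -> y \in S.
  move=> y; rewrite inE => /connectP [p Hp ->]; exact: inS Hx Hp.
have Cc : forall u v, u \in C0 -> v \in C0 -> connect E u v.
  move=> u v; rewrite !inE => Hu Hv; apply: connect_trans Hv.
  by rewrite ESc.
pose leb := fun u v : T => Rleb (l u) (l v).
have leb_tot : total leb.
  move=> u v; rewrite /leb; case: (RlebP (l u) (l v)) => //= H; apply/RlebP; lra.
have leb_tr : transitive leb.
  move=> v u w /RlebP H1 /RlebP H2; apply/RlebP; lra.
have leb_refl : reflexive leb by move=> u; apply/RlebP; lra.
pose s := sort leb (enum C0).
have s_uniq : uniq s by rewrite sort_uniq enum_uniq.
have s_mem : forall y, (y \in s) = (y \in C0) by move=> y; rewrite mem_sort mem_enum.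
have s_sorted : sorted leb s by apply: sort_sorted.
exists s; split => //; split; first by move=> y; rewrite s_mem.
move=> x0.
have sS : forall i, i < size s -> good e (nth x0 s i).
  move=> i Hi; apply/gS/CS; rewrite -s_mem; exact: mem_nth.
have monoW : forall i j, i < size s -> j < size s -> i <= j -> l (nth x0 s i) <=R l (nth x0 s j).
  move=> i j Hi Hj Hij; apply/RlebP.
  exact: (sorted_leq_nth leb_tr leb_refl x0 s_sorted).
have mono : forall i j, i < size s -> j < size s -> i < j -> l (nth x0 s i) <R l (nth x0 s j).
  move=> i j Hi Hj Hij.
  have H1 := monoW i j Hi Hj (ltnW Hij).
  case: (Rle_lt_or_eq_dec _ _ H1) => // Heq; exfalso.
  have := linj HG Hc (sS i Hi) (sS j Hj) Heq.
  move/eqP; rewrite nth_uniq //; lia.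
have key : forall i j, i < j -> j < size s -> (e (nth x0 s i) (nth x0 s j) <-> i.+1 == j).
  move=> i j Hij Hj; have Hi : i < size s by lia.
  split => [He | /eqP Hj1].
  - case: (eqVneq i.+1 j) => // Hne; exfalso.
    have Hk : i.+1 < j by lia.
    have Hi1 : i.+1 < size s by lia.
    have := p2 HG Hc (sS i Hi) (sS i.+1 Hi1) (sS j Hj) (mono i i.+1 Hi Hi1 (ltnSn i))
      (mono i.+1 j Hi1 Hj Hk).
    by rewrite He.
  - subst j.
    set u := nth x0 s i; set v := nth x0 s i.+1.
    have uC : u \in C0 by rewrite -s_mem mem_nth.
    have vC : v \in C0 by rewrite -s_mem mem_nth.
    have Huv : l u <R l v := mono i i.+1 Hi Hj (ltnSn i).
    case/connectP: (Cc u v uC vC) => p Hp Hlast.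
    have Pu : Rleb (l u) (l u) by apply/RlebP; lra.
    have Pv : ~~ Rleb (l (last u p)) (l u) by rewrite -Hlast; apply/RlebP => H; lra.
    have [y [z [Huy Hyz /RlebP Py /RlebP Pz]]] :=
      @crossing T E (fun w => Rleb (l w) (l u)) u p u (connect0 E u) Hp Pu Pv.
    have yC : y \in C0.
      by rewrite inE; apply: connect_trans Huy; move: uC; rewrite inE.
    have /and3P [eyz yS zS] := Hyz.
    have zC : z \in C0.
      by rewrite inE; apply: connect_trans (connect1 Hyz); move: yC; rewrite inE.
    have zs : z \in s by rewrite s_mem.
    set m := index z s.
    have Hm : m < size s by rewrite index_mem.
    have Hz : nth x0 s m = z by apply: nth_index.
    have Hlz : l u <R l z by lra.
    have Hmi : i.+1 <= m.
      rewrite ltnNge; apply/negP=> Hmi.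
      have := monoW m i Hm Hi Hmi; rewrite Hz -/u => H; lra.
    have gy := gS y yS; have gz := gS z zS; have gu := sS i Hi.
    case: (eqVneq y u) => [Eyu | Nyu].
    + case: (eqVneq m i.+1) => [Em | Nm].
      * have -> : v = z by rewrite /v -Em Hz.
        by rewrite -Eyu.
      * exfalso. have Hlt : i.+1 < m by rewrite ltn_neqAle eq_sym Nm Hmi.
        have Hvz : l v <R l z by rewrite -Hz; exact: mono _ _ Hj Hm Hlt.
        have := p2 HG Hc gu (sS _ Hj) gz Huv Hvz.
        by move: eyz; rewrite Eyu => ->.
    + exfalso.
      have Hly : l y <R l u.
        case: (Rle_lt_or_eq_dec _ _ Py) => // E'.
        by move/eqP: Nyu; case; exact: linj HG Hc gy gu E'.
      have := p2 HG Hc gy gu gz Hly Hlz.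
      by rewrite eyz.
move=> i j Hi Hj.
case: (ltngtP i j) => Hij.
- rewrite (key i j Hij Hj).
  have -> : (j.+1 == i) = false by clear -Hij; apply/negbTE/eqP; lia.
  by rewrite orbF.
- rewrite Hs (key j i Hij Hi).
  have -> : (i.+1 == j) = false by clear -Hij; apply/negbTE/eqP; lia.
  by [].
- subst j; rewrite Hirr.
  have -> : (i.+1 == i) = false by apply/negbTE/eqP; clear; lia.
  by [].
Qed.
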